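(* Let $(X,d^\star)$ be a complete $\star$-metric space and $M\subseteq X$ nonempty. Then the subspace $(M,d^\star|_{M\times M})$ is complete if and only if $M$ is closed in $X$.
   Context: A $t$-definer is a function $\star:[0,\infty)\times[0,\infty)\to[0,\infty)$ such that for all $a,b,c\ge 0$: $a\star b=b\star a$; $a\star(b\star c)=(a\star b)\star c$; if $a\le b$ then $a\star c\le b\star c$; $a\star 0=a$; and $\star$ is continuous in its first variable with respect to the Euclidean topology. Given a nonempty set $X$ and a $t$-definer $\star$, a $\star$-metric on $X$ is a function $d^\star:X\times X\to[0,\infty)$ such that for all $x,y,z\in X$: $d^\star(x,y)=0$ iff $x=y$; $d^\star(x,y)=d^\star(y,x)$; and $d^\star(x,y)\le d^\star(x,z)\star d^\star(z,y)$. Closedness refers to the topology consisting of all $U\subseteq X$ such that for each $a\in U$ there is $r>0$ with $\{x: d^\star(a,x)<r\}\subseteq U$. A sequence $\{x_n\}$ is Cauchy if for every $\epsilon>0$ there is $k$ with $d^\star(x_n,x_m)<\epsilon$ for all $m,n\ge k$; it converges to $x$ if for every $\epsilon>0$ there is $k$ with $d^\star(x,x_n)<\epsilon$ for $n\ge k$. A $\star$-metric space is complete if every Cauchy sequence in it converges to a point of the space. *)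

(* Defs.v *)
From Stdlib Require Import Reals.
Open Scope R_scope.

(* A t-definer: a binary operation on [0,oo), modelled as a function R -> R -> R
   whose axioms are imposed on nonnegative arguments. *)
Definition t_definer (star : R -> R -> R) : Prop :=
  (forall a b, 0 <= a -> 0 <= b -> 0 <= star a b) /\
  (forall a b, 0 <= a -> 0 <= b -> star a b = star b a) /\
  (forall a b c, 0 <= a -> 0 <= b -> 0 <= c ->
      star a (star b c) = star (star a b) c) /\
  (forall a b c, 0 <= a -> 0 <= b -> 0 <= c -> a <= b -> star a c <= star b c) /\
  (forall a, 0 <= a -> star a 0 = a) /\
  (forall b a, 0 <= b -> 0 <= a -> forall eps, 0 < eps ->
      exists delta, 0 < delta /\
        forall a', 0 <= a' -> Rabs (a' - a) < delta ->
          Rabs (star a' b - star a b) < eps).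

Definition star_metric {X : Type} (star : R -> R -> R) (d : X -> X -> R) : Prop :=
  (forall x y, 0 <= d x y) /\
  (forall x y, d x y = 0 <-> x = y) /\
  (forall x y, d x y = d y x) /\
  (forall x y z, d x y <= star (d x z) (d z y)).

Definition sm_open {X : Type} (d : X -> X -> R) (U : X -> Prop) : Prop :=
  forall a, U a -> exists r, 0 < r /\ forall x, d a x < r -> U x.

Definition sm_closed {X : Type} (d : X -> X -> R) (F : X -> Prop) : Prop :=
  sm_open d (fun x => ~ F x).

Definition sm_cauchy {X : Type} (d : X -> X -> R) (u : nat -> X) : Prop :=
  forall eps, 0 < eps -> exists k, forall m n, (k <= m)%nat -> (k <= n)%nat ->
    d (u n) (u m) < eps.

Definition sm_converges {X : Type} (d : X -> X -> R) (u : nat -> X) (x : X) : Prop :=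
  forall eps, 0 < eps -> exists k, forall n, (k <= n)%nat -> d x (u n) < eps.

Definition sm_complete {X : Type} (d : X -> X -> R) : Prop :=
  forall u : nat -> X, sm_cauchy d u -> exists x, sm_converges d u x.

Definition restrict_metric {X : Type} (M : X -> Prop) (d : X -> X -> R)
  : {x | M x} -> {x | M x} -> R :=
  fun p q => d (proj1_sig p) (proj1_sig q).

(* Main.v *)
Require Import Defs.
From Stdlib Require Import Reals Lra Lia Classical ClassicalEpsilon.
Open Scope R_scope.

Lemma star_small (star : R -> R -> R) (Hstar : t_definer star) :
  forall eps, 0 < eps -> exists e, 0 < e /\ forall s t, 0 <= s -> s < e -> 0 <= t -> t < e -> star s t < eps.
Proof.
  destruct Hstar as [H0 [Hc [Ha [Hm [Hz Hcont]]]]].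
  intros eps Heps.
  destruct (Hcont (eps/2) 0 ltac:(lra) ltac:(lra) (eps/2) ltac:(lra)) as [del [Hdel Hd]].
  exists (Rmin del (eps/2)). split.
  { apply Rmin_pos; lra. }
  intros s t Hs Hs' Ht Ht'.
  pose proof (Rmin_l del (eps/2)). pose proof (Rmin_r del (eps/2)).
  assert (star s t <= star s (eps/2)).
  { rewrite (Hc s t) by lra. rewrite (Hc s (eps/2)) by lra. apply Hm; lra. }
  assert (Rabs (star s (eps/2) - star 0 (eps/2)) < eps/2).
  { apply Hd; try lra. rewrite Rminus_0_r, Rabs_right; lra. }
  rewrite (Hc 0 (eps/2)), Hz in H3 by lra.
  apply Rabs_def2 in H3. lra.
Qed.

Lemma inv_small : forall eps, 0 < eps -> exists N, forall n, (N <= n)%nat -> / INR (S n) < eps.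
Proof.
  intros eps He. destruct (archimed_cor1 eps He) as [N [HN HN0]].
  exists N. intros n Hn. eapply Rle_lt_trans; [|exact HN].
  apply Rinv_le_contravar. apply lt_0_INR; lia. apply le_INR; lia.
Qed.

Theorem theorem4p11 (X : Type) (star : R -> R -> R) (d : X -> X -> R)
  (Hstar : t_definer star) (Hd : star_metric star d) (Hcomp : sm_complete d)
  (M : X -> Prop) (HM : exists x, M x) :
  sm_complete (restrict_metric M d) <-> sm_closed d M.
Proof.
  destruct Hd as [Hpos [Heq [Hsym Htri]]].
  split.
  - intros Hc a Hna.
    apply NNPP. intro Hno.
    assert (Hex : forall n : nat, exists x, M x /\ d a x < / INR (S n)).
    { intro n. apply NNPP. intro Hn. apply Hno.
      exists (/ INR (S n)). split.
      { apply Rinv_0_lt_compat, lt_0_INR; lia. }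
      intros x Hx Mx. apply Hn. exists x; auto. }
    set (u := fun n => constructive_indefinite_description _ (Hex n)).
    set (v := fun n => exist M (proj1_sig (u n)) (proj1 (proj2_sig (u n)))).
    assert (Hu : forall n, d a (proj1_sig (u n)) < / INR (S n)).
    { intro n. exact (proj2 (proj2_sig (u n))). }
    assert (Hcv : sm_cauchy (restrict_metric M d) v).
    { intros eps Heps. destruct (star_small star Hstar eps Heps) as [e [He Hs]].
      destruct (inv_small e He) as [N HN]. exists N. intros m n Hm Hn.
      unfold restrict_metric, v; simpl.
      eapply Rle_lt_trans. apply (Htri _ _ a).
      pose proof (Hu n); pose proof (HN n Hn); pose proof (Hu m); pose proof (HN m Hm).
      rewrite (Hsym _ a).
      apply Hs; auto; simpl in *; lra. }
    destruct (Hc v Hcv) as [[y My] Hy].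
    assert (d a y = 0).
    { apply Rle_antisym; [|apply Hpos].
      apply Rnot_lt_le. intro Hlt.
      destruct (star_small star Hstar (d a y) Hlt) as [e [He Hs]].
      destruct (inv_small e He) as [N HN].
      destruct (Hy e He) as [k Hk].
      pose proof (Hk (max N k) ltac:(lia)) as H1.
      pose proof (Hu (max N k)). pose proof (HN (max N k) ltac:(lia)).
      unfold restrict_metric, v in H1; simpl in H1.
      pose proof (Htri a y (proj1_sig (u (max N k)))).
      assert (star (d a (proj1_sig (u (max N k)))) (d (proj1_sig (u (max N k))) y) < d a y).
      { rewrite (Hsym _ y). apply Hs; auto; lra. }
      lra. }
    apply Heq in H. subst. contradiction.
  - intros Hcl u Hu.
    set (w := fun n => proj1_sig (u n)).
    assert (Hw : sm_cauchy d w) by exact Hu.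
    destruct (Hcomp w Hw) as [x Hx].
    assert (Mx : M x).
    { apply NNPP. intro Hn. destruct (Hcl x Hn) as [r [Hr Hb]].
      destruct (Hx r Hr) as [k Hk].
      apply (Hb (w k) (Hk k (le_n k))). unfold w. exact (proj2_sig (u k)). }
    exists (exist M x Mx). exact Hx.
Qed.
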